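(* Let $G$ be a countable group, equipped with a proper left-invariant metric, acting by isometries on a metric space $X$ that has straight finite decomposition complexity. If there is a point $x_0\in X$ such that for every $R>0$ the $R$-coarse stabilizer $\{g\in G: d(g.x_0,x_0)\le R\}$ (with the metric restricted from $G$) has straight finite decomposition complexity, then $G$ has straight finite decomposition complexity.
   Context: A metric is proper if bounded sets are finite. For metric families $\mathcal X,\mathcal Y$ and $R>0$, $\mathcal X\xrightarrow{R}\mathcal Y$ means every $Z\in\mathcal X$ can be written $Z=Z^0\cup Z^1$ with each $Z^i$ a union of members of $\mathcal Y$ that are pairwise at distance $>R$. A metric space $X$ (identified with the family $\{X\}$) has straight finite decomposition complexity if for every sequence $R_1\le R_2\le\cdots$ there exist $n$ and metric families $\mathcal Y^1,\dots,\mathcal Y^n$ with $\{X\}\xrightarrow{R_1}\mathcal Y^1$, $\mathcal Y^{i-1}\xrightarrow{R_i}\mathcal Y^i$ ($2\le i\le n$), and $\mathcal Y^n$ uniformly bounded. *)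

(* Defs.v *)
From Stdlib Require Import Reals List.
Open Scope R_scope.

Definition is_metric {T : Type} (d : T -> T -> R) : Prop :=
  (forall x y, 0 <= d x y) /\
  (forall x y, d x y = 0 <-> x = y) /\
  (forall x y, d x y = d y x) /\
  (forall x y z, d x z <= d x y + d y z).

Definition bounded_set {T : Type} (d : T -> T -> R) (S : T -> Prop) : Prop :=
  exists B : R, forall a b, S a -> S b -> d a b <= B.

Definition finite_set {T : Type} (S : T -> Prop) : Prop :=
  exists l : list T, forall x, S x -> In x l.

Definition proper_metric {T : Type} (d : T -> T -> R) : Prop :=
  forall S : T -> Prop, bounded_set d S -> finite_set S.

(** Metric families: since every family occurring in the definition of
    straight FDC of a (sub)space consists of subspaces of it, a metric
    family is modelled as a collection of subsets of the ambient space,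
    each carrying the restricted metric. *)
Definition family (T : Type) := (T -> Prop) -> Prop.

(** Distance between two subsets is > R (d(A,B) = inf, so inf > R; empty
    sets are at distance +oo). *)
Definition set_dist_gt {T : Type} (d : T -> T -> R) (R0 : R) (A B : T -> Prop) : Prop :=
  exists r : R, R0 < r /\ forall a b, A a -> B b -> r <= d a b.

Definition R_disjoint_union_of {T : Type} (d : T -> T -> R) (R0 : R)
    (Y : family T) (Z : T -> Prop) : Prop :=
  exists W : family T,
    (forall V, W V -> Y V) /\
    (forall x, Z x <-> exists V, W V /\ V x) /\
    (forall V1 V2, W V1 -> W V2 -> V1 <> V2 -> set_dist_gt d R0 V1 V2).

Definition decomposes {T : Type} (d : T -> T -> R) (X : family T) (R0 : R)
    (Y : family T) : Prop :=
  forall Z, X Z ->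
    exists Z0 Z1 : T -> Prop,
      (forall x, Z x <-> Z0 x \/ Z1 x) /\
      R_disjoint_union_of d R0 Y Z0 /\ R_disjoint_union_of d R0 Y Z1.

Definition uniformly_bounded {T : Type} (d : T -> T -> R) (Y : family T) : Prop :=
  exists B : R, forall V, Y V -> forall a b, V a -> V b -> d a b <= B.

Definition singleton_family {T : Type} (S : T -> Prop) : family T :=
  fun V => V = S.

(** Straight FDC of the subspace A (with restricted metric).
    The sequence R_1 <= R_2 <= ... is Rs 0 <= Rs 1 <= ..., all > 0;
    the families Y^1..Y^n are Ys 0 .. Ys n' (n = n'+1). *)
Definition sFDC_sub {T : Type} (d : T -> T -> R) (A : T -> Prop) : Prop :=
  forall Rs : nat -> R,
    (forall i, 0 < Rs i) -> (forall i, Rs i <= Rs (S i)) ->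
    exists (n' : nat) (Ys : nat -> family T),
      decomposes d (singleton_family A) (Rs 0%nat) (Ys 0%nat) /\
      (forall i, (i < n')%nat -> decomposes d (Ys i) (Rs (S i)) (Ys (S i))) /\
      uniformly_bounded d (Ys n').

Definition sFDC {T : Type} (d : T -> T -> R) : Prop :=
  sFDC_sub d (fun _ => True).

Record group_str (G : Type) := GroupStr {
  gmul : G -> G -> G;
  ginv : G -> G;
  gone : G;
  gmulA : forall a b c, gmul a (gmul b c) = gmul (gmul a b) c;
  gmul1 : forall a, gmul gone a = a;
  gmulV : forall a, gmul (ginv a) a = gone
}.
Arguments gmul {G} g _ _.
Arguments ginv {G} g _.
Arguments gone {G} g.

Definition countable_type (T : Type) : Prop :=
  exists f : T -> nat, forall x y, f x = f y -> x = y.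

Definition left_invariant {G : Type} (g : group_str G) (d : G -> G -> R) : Prop :=
  forall a b c, d (gmul g a b) (gmul g a c) = d b c.

Definition isometric_action {G X : Type} (g : group_str G) (dX : X -> X -> R)
    (act : G -> X -> X) : Prop :=
  (forall x, act (gone g) x = x) /\
  (forall a b x, act (gmul g a b) x = act a (act b x)) /\
  (forall a x y, dX (act a x) (act a y) = dX x y).

Definition coarse_stabilizer {G X : Type} (dX : X -> X -> R) (act : G -> X -> X)
    (x0 : X) (R0 : R) : G -> Prop :=
  fun a => dX (act a x0) x0 <= R0.

(* Main.v *)
Require Import Defs.
From Stdlib Require Import Reals.
From Stdlib Require Import Lra List Classical IndefiniteDescription Arith Lia.
Open Scope R_scope.

Definition pre {G X : Type} (f : G -> X) (F : Defs.family X) : Defs.family G :=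
  fun U => exists V, F V /\ U = (fun a => V (f a)).

Definition tr {G : Type} (g : group_str G) (P F : Defs.family G) : Defs.family G :=
  fun U' => exists U a0 Z, P U /\ U a0 /\ F Z /\
    U' = (fun a => U a /\ Z (gmul g (ginv g a0) a)).

Lemma pull_union {G X : Type} (dG : G -> G -> R) (dX : X -> X -> R) (f : G -> X)
  (Rg Rx : R) (Y : Defs.family X) (V0 : X -> Prop) :
  (forall a b, dG a b <= Rg + 1 -> dX (f a) (f b) <= Rx) ->
  R_disjoint_union_of dX Rx Y V0 ->
  R_disjoint_union_of dG Rg (pre f Y) (fun a => V0 (f a)).
Proof.
  intros Hf [W [Ws [Wu Wd]]].
  exists (pre f W). split; [|split].
  - intros U [V [HV ->]]. exists V; split; auto.
  - intro x. split.
    + intros H. apply Wu in H. destruct H as [V [HV HVx]].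
      exists (fun a => V (f a)). split; [exists V; auto | exact HVx].
    + intros [U [[V [HV ->]] HUx]]. apply Wu. exists V; auto.
  - intros U1 U2 [V1 [HV1 ->]] [V2 [HV2 ->]] Hne.
    assert (H : V1 <> V2) by (intro; subst; apply Hne; reflexivity).
    destruct (Wd V1 V2 HV1 HV2 H) as [r [Hr Hrd]].
    exists (Rg + 1). split; [lra|]. intros a b Ha Hb.
    destruct (Rle_lt_dec (dG a b) (Rg+1)) as [Hle|Hlt]; [|lra].
    pose proof (Hf a b Hle). pose proof (Hrd _ _ Ha Hb). lra.
Qed.

Lemma pull_dec {G X : Type} (dG : G -> G -> R) (dX : X -> X -> R) (f : G -> X)
  (Rg Rx : R) (YX YX' : Defs.family X) :
  (forall a b, dG a b <= Rg + 1 -> dX (f a) (f b) <= Rx) ->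
  decomposes dX YX Rx YX' -> decomposes dG (pre f YX) Rg (pre f YX').
Proof.
  intros Hf Hd Z [V [HV ->]].
  destruct (Hd V HV) as [V0 [V1 [Hu [H0 H1]]]].
  exists (fun a => V0 (f a)), (fun a => V1 (f a)).
  split; [intro x; apply Hu|].
  split; eapply pull_union; eauto.
Qed.

Lemma dec_mono {T : Type} (d : T -> T -> R) (F F' Y : Defs.family T) (R0 : R) :
  (forall Z, F Z -> F' Z) -> decomposes d F' R0 Y -> decomposes d F R0 Y.
Proof. intros H Hd Z HZ. apply Hd, H, HZ. Qed.

Lemma tr_union {G : Type} (g : group_str G) (dG : G -> G -> R) (P F : Defs.family G)
  (R0 : R) (U : G -> Prop) (a0 : G) (S0 : G -> Prop) :
  left_invariant g dG -> P U -> U a0 ->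
  (forall Z, F Z -> F Z) ->
  R_disjoint_union_of dG R0 F S0 ->
  R_disjoint_union_of dG R0 (tr g P F) (fun a => U a /\ S0 (gmul g (ginv g a0) a)).
Proof.
  intros Hinv HP Ha0 _ [W [Ws [Wu Wd]]].
  exists (fun U' => exists Z, W Z /\ U' = (fun a => U a /\ Z (gmul g (ginv g a0) a))).
  split;[|split].
  - intros U' [Z [HZ ->]]. exists U, a0, Z. repeat split; auto.
  - intro x; split.
    + intros [HUx HS]. apply Wu in HS. destruct HS as [Z [HZ HZx]].
      exists (fun a => U a /\ Z (gmul g (ginv g a0) a)).
      split; [exists Z; auto| split; auto].
    + intros [U' [[Z [HZ ->]] [HUx HZx]]]. split; auto. apply Wu. exists Z; auto.
  - intros U1 U2 [Z1 [HZ1 ->]] [Z2 [HZ2 ->]] Hne.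
    assert (H : Z1 <> Z2) by (intro; subst; apply Hne; reflexivity).
    destruct (Wd _ _ HZ1 HZ2 H) as [r [Hr Hrd]]. exists r; split; auto.
    intros a b [_ Ha] [_ Hb]. rewrite <- (Hinv (ginv g a0) a b). apply Hrd; auto.
Qed.

Lemma tr_bd {G : Type} (g : group_str G) (dG : G -> G -> R) (P F : Defs.family G) :
  left_invariant g dG -> uniformly_bounded dG F -> uniformly_bounded dG (tr g P F).
Proof.
  intros Hinv [B HB]. exists B.
  intros U' [U [a0 [Z [_ [_ [HZ ->]]]]]] a b [_ Ha] [_ Hb].
  rewrite <- (Hinv (ginv g a0)). apply HB with Z; auto.
Qed.

Lemma empty_union {T : Type} (d : T -> T -> R) (R0 : R) (Y : Defs.family T) (U : T -> Prop) :
  ~ (exists a, U a) -> R_disjoint_union_of d R0 Y U.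
Proof.
  intros Hn. exists (fun _ => False). split; [intros V []|split].
  - intro x; split; [intro Hx; exfalso; apply Hn; eauto | intros [V [[] _]]].
  - intros V1 V2 [].
Qed.

Lemma bridge {G : Type} (g : group_str G) (dG : G -> G -> R) (P F : Defs.family G)
  (St : G -> Prop) (R0 : R) :
  left_invariant g dG ->
  (forall U a0 a, P U -> U a0 -> U a -> St (gmul g (ginv g a0) a)) ->
  decomposes dG (singleton_family St) R0 F -> decomposes dG P R0 (tr g P F).
Proof.
  intros Hinv Hst Hd U HP.
  destruct (classic (exists a0, U a0)) as [[a0 Ha0]|Hn].
  - destruct (Hd St eq_refl) as [S0 [S1 [Hu [H0 H1]]]].
    exists (fun a => U a /\ S0 (gmul g (ginv g a0) a)),
           (fun a => U a /\ S1 (gmul g (ginv g a0) a)). split.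
    + intro x. split.
      * intro HUx. pose proof (Hst U a0 x HP Ha0 HUx) as Hs. apply Hu in Hs.
        destruct Hs; [left|right]; auto.
      * intros [[? ?]|[? ?]]; auto.
    + split; eapply tr_union; eauto.
  - exists U, U. split; [intro x; tauto|]. split; apply empty_union; auto.
Qed.

Lemma tr_dec {G : Type} (g : group_str G) (dG : G -> G -> R) (P F F' : Defs.family G) (R0 : R) :
  left_invariant g dG -> decomposes dG F R0 F' -> decomposes dG (tr g P F) R0 (tr g P F').
Proof.
  intros Hinv Hd Z' [U [a0 [Z [HP [Ha0 [HZ ->]]]]]].
  destruct (Hd Z HZ) as [S0 [S1 [Hu [H0 H1]]]].
  exists (fun a => U a /\ S0 (gmul g (ginv g a0) a)),
         (fun a => U a /\ S1 (gmul g (ginv g a0) a)). split.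
  - intro x. pose proof (Hu (gmul g (ginv g a0) x)). tauto.
  - split; eapply tr_union; eauto.
Qed.

Lemma in_fold_max {T : Type} (l : list T) (f : T -> R) (c : T) :
  In c l -> f c <= fold_right Rmax 0 (map f l).
Proof.
  induction l as [|h l IH]; simpl; [tauto|].
  intros [->|H]; [apply Rmax_l|]. eapply Rle_trans; [apply IH, H| apply Rmax_r].
Qed.

Lemma orbit_bound (G : Type) (g : group_str G) (dG : G -> G -> R)
  (X : Type) (dX : X -> X -> R) (act : G -> X -> X) (x0 : X) :
  is_metric dG -> proper_metric dG -> left_invariant g dG -> isometric_action g dX act ->
  forall S, exists L, forall a b, dG a b <= S -> dX (act a x0) (act b x0) <= L.
Proof.
  intros [d0 [dz [ds dt]]] Hp Hinv [Ha1 [Ham Hai]] S.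
  destruct (Hp (fun c => dG c (gone g) <= S)) as [l Hl].
  { exists (S + S). intros a b Ha Hb. specialize (dt a (gone g) b).
    rewrite (ds (gone g) b) in dt. lra. }
  exists (fold_right Rmax 0 (map (fun c => dX (act c x0) x0) l)).
  intros a b Hab.
  assert (Hc: dG (gmul g (ginv g b) a) (gone g) <= S).
  { rewrite <- (gmulV _ g b). rewrite Hinv. exact Hab. }
  assert (E: dX (act a x0) (act b x0) = dX (act (gmul g (ginv g b) a) x0) x0).
  { rewrite Ham. rewrite <- (Hai (ginv g b) (act a x0) (act b x0)).
    rewrite <- (Ham (ginv g b) b x0), gmulV, Ha1. reflexivity. }
  rewrite E. apply (in_fold_max l (fun c => dX (act c x0) x0)). apply Hl, Hc.
Qed.

Fixpoint Sx (L : R -> R) (Rs : nat -> R) (n : nat) : R :=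
  match n with
  | O => Rabs (L (Rs 0%nat + 1)) + 1
  | S k => Sx L Rs k + Rabs (L (Rs (S k) + 1))
  end.

Lemma Sx_pos L Rs n : 0 < Sx L Rs n.
Proof.
  induction n as [|n IH]; simpl.
  - pose proof (Rabs_pos (L (Rs 0%nat + 1))); lra.
  - pose proof (Rabs_pos (L (Rs (S n) + 1))); lra.
Qed.

Lemma Sx_mon L Rs n : Sx L Rs n <= Sx L Rs (S n).
Proof. simpl. pose proof (Rabs_pos (L (Rs (S n) + 1))). lra. Qed.

Lemma Sx_ge L Rs n : L (Rs n + 1) <= Sx L Rs n.
Proof.
  destruct n; simpl.
  - pose proof (Rle_abs (L (Rs 0%nat + 1))). lra.
  - pose proof (Rle_abs (L (Rs (S n) + 1))). pose proof (Sx_pos L Rs n). lra.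
Qed.

Theorem proposition5p4 (G : Type) (g : group_str G) (dG : G -> G -> R)
  (X : Type) (dX : X -> X -> R) (act : G -> X -> X) :
  countable_type G ->
  is_metric dG -> proper_metric dG -> left_invariant g dG ->
  is_metric dX -> isometric_action g dX act ->
  sFDC dX ->
  (exists x0 : X, forall R0 : R, 0 < R0 ->
      sFDC_sub dG (coarse_stabilizer dX act x0 R0)) ->
  sFDC dG.
Proof.
  intros _ HmG Hp Hinv HmX Hact HX [x0 Hst] Rs Hpos Hmon.
  pose proof (orbit_bound G g dG X dX act x0 HmG Hp Hinv Hact) as Hob.
  pose (Lf := fun S => proj1_sig (constructive_indefinite_description _ (Hob S))).
  assert (HLf : forall S a b, dG a b <= S -> dX (act a x0) (act b x0) <= Lf S)
    by (intro S; exact (proj2_sig (constructive_indefinite_description _ (Hob S)))).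
  pose (p := fun a => act a x0).
  assert (Hf : forall k a b, dG a b <= Rs k + 1 -> dX (p a) (p b) <= Sx Lf Rs k).
  { intros k a b H. eapply Rle_trans; [apply HLf, H| apply Sx_ge]. }
  destruct (HX (Sx Lf Rs) (Sx_pos Lf Rs) (Sx_mon Lf Rs)) as [nX [YX [h0 [hstep [B HB]]]]].
  set (B' := Rabs B + 1).
  assert (HB' : 0 < B') by (unfold B'; pose proof (Rabs_pos B); lra).
  destruct (Hst B' HB' (fun j => Rs (S nX + j)%nat)) as [m [Z [z0 [zstep zbd]]]].
  { intro; apply Hpos. }
  { intro j. replace (S nX + S j)%nat with (S (S nX + j)) by lia. apply Hmon. }
  set (P := pre p (YX nX)).
  pose (YG := fun i => if Nat.leb i nX then pre p (YX i) else tr g P (Z (i - S nX)%nat)).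
  assert (Hcont : forall U a0 a, P U -> U a0 -> U a ->
            coarse_stabilizer dX act x0 B' (gmul g (ginv g a0) a)).
  { intros U a0 a [V [HV ->]] H0 H1. unfold coarse_stabilizer.
    destruct Hact as [Ha1 [Ham Hai]].
    assert (E: dX (act (gmul g (ginv g a0) a) x0) x0 = dX (act a x0) (act a0 x0)).
    { rewrite <- (Hai (ginv g a0) (act a x0) (act a0 x0)).
      rewrite <- !Ham, gmulV, Ha1. reflexivity. }
    rewrite E. pose proof (HB V HV _ _ H1 H0) as HH. unfold p in HH. unfold B'.
    pose proof (Rle_abs B). lra. }
  exists (S nX + m)%nat, YG. split; [|split].
  - unfold YG. simpl. eapply dec_mono; [|eapply pull_dec; [apply Hf|exact h0]].
    intros Z0 HZ0. unfold singleton_family in HZ0. subst Z0.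
    exists (fun _ => True). split; reflexivity.
  - intros i Hi. destruct (lt_eq_lt_dec i nX) as [[Hlt|Heq]|Hgt].
    + unfold YG. replace (Nat.leb i nX) with true by (symmetry; apply Nat.leb_le; lia).
      replace (Nat.leb (S i) nX) with true by (symmetry; apply Nat.leb_le; lia).
      apply (pull_dec dG dX p _ (Sx Lf Rs (S i))); [apply Hf| apply hstep; exact Hlt].
    + subst i. unfold YG. rewrite Nat.leb_refl.
      replace (Nat.leb (S nX) nX) with false by (symmetry; apply Nat.leb_gt; lia).
      rewrite Nat.sub_diag. apply (bridge g dG P _ (coarse_stabilizer dX act x0 B')); [exact Hinv|exact Hcont|].
      replace (Rs (S nX)) with (Rs (S nX + 0)%nat) by (f_equal; lia). exact z0.
    + unfold YG.
      replace (Nat.leb i nX) with false by (symmetry; apply Nat.leb_gt; lia).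
      replace (Nat.leb (S i) nX) with false by (symmetry; apply Nat.leb_gt; lia).
      replace (S i - S nX)%nat with (S (i - S nX)) by lia.
      apply tr_dec; [exact Hinv|].
      replace (Rs (S i)) with (Rs (S nX + S (i - S nX))%nat) by (f_equal; lia).
      apply zstep. lia.
  - unfold YG.
    replace (Nat.leb (S nX + m) nX) with false by (symmetry; apply Nat.leb_gt; lia).
    replace (S nX + m - S nX)%nat with m by lia.
    apply tr_bd; assumption.
Qed.
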